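(* Let $0\le\lambda<\gamma\le\delta$ and let $\mathfrak{f}=\mathfrak{s}+\overline{\mathfrak{t}}\in\mathcal{H}^0$. Then $\mathfrak{f}\in\mathcal{R}_H^0(\gamma,\delta,\lambda)$ if and only if $F_\epsilon=\mathfrak{s}+\epsilon\mathfrak{t}\in\mathcal{R}(\gamma,\delta,\lambda)$ for each $\epsilon\in\mathbb{C}$ with $|\epsilon|=1$.
   Context: Let $\mathcal{U}=\{z\in\mathbb{C}:|z|<1\}$. $\mathcal{H}^0$ denotes the class of complex-valued harmonic functions $\mathfrak{f}=\mathfrak{s}+\overline{\mathfrak{t}}$ on $\mathcal{U}$, where $\mathfrak{s}(z)=z+\sum_{m\ge2}a_mz^m$ and $\mathfrak{t}(z)=\sum_{m\ge2}b_mz^m$ are analytic in $\mathcal{U}$. $\mathcal{A}$ denotes the class of analytic functions $F$ in $\mathcal{U}$ with $F(0)=0$, $F'(0)=1$. For real $0\le\lambda<\gamma\le\delta$, $\mathcal{R}_H^0(\gamma,\delta,\lambda)$ is the class of $\mathfrak{f}=\mathfrak{s}+\overline{\mathfrak{t}}\in\mathcal{H}^0$ such that for all $z\in\mathcal{U}$, $\mathrm{Re}\left[\gamma\mathfrak{s}'(z)+\delta z\mathfrak{s}''(z)+\frac{\delta-\gamma}{2}z^2\mathfrak{s}'''(z)-\lambda\right]>\left|\gamma\mathfrak{t}'(z)+\delta z\mathfrak{t}''(z)+\frac{\delta-\gamma}{2}z^2\mathfrak{t}'''(z)\right|$, and $\mathcal{R}(\gamma,\delta,\lambda)$ is the class of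 $F\in\mathcal{A}$ such that $\mathrm{Re}\{\gamma F'(z)+\delta zF''(z)+\frac{\delta-\gamma}{2}z^2F'''(z)\}>\lambda$ for all $z\in\mathcal{U}$. *)

(* Defs.v *)
From Stdlib Require Import Reals.
From Coquelicot Require Import Coquelicot.
Open Scope R_scope.

Definition inU (z : C) : Prop := Cmod z < 1.

Definition analytic_U (f : C -> C) : Prop :=
  forall z, inU z -> @ex_derive C_AbsRing C_NormedModule f z.

Definition derivs3_U (f f1 f2 f3 : C -> C) : Prop :=
  forall z, inU z ->
    @is_derive C_AbsRing C_NormedModule f z (f1 z) /\
    @is_derive C_AbsRing C_NormedModule f1 z (f2 z) /\
    @is_derive C_AbsRing C_NormedModule f2 z (f3 z).

Definition Lop (g d : R) (f1 f2 f3 : C -> C) (z : C) : C :=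
  (RtoC g * f1 z + RtoC d * z * f2 z
   + RtoC ((d - g) / 2) * (z * z) * f3 z)%C.

Definition classA (F : C -> C) : Prop :=
  analytic_U F /\ F (RtoC 0) = RtoC 0 /\ @is_derive C_AbsRing C_NormedModule F (RtoC 0) (RtoC 1).

(* class H^0 : f = s + conj t with s(z) = z + sum_{m>=2} a_m z^m,
   t(z) = sum_{m>=2} b_m z^m analytic in U, i.e. s(0)=0, s'(0)=1, t(0)=0, t'(0)=0 *)
Definition classH0 (s t : C -> C) : Prop :=
  analytic_U s /\ analytic_U t /\
  s (RtoC 0) = RtoC 0 /\ @is_derive C_AbsRing C_NormedModule s (RtoC 0) (RtoC 1) /\
  t (RtoC 0) = RtoC 0 /\ @is_derive C_AbsRing C_NormedModule t (RtoC 0) (RtoC 0).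

Definition classRH0 (g d l : R) (s t : C -> C) : Prop :=
  classH0 s t /\
  exists s1 s2 s3 t1 t2 t3 : C -> C,
    derivs3_U s s1 s2 s3 /\ derivs3_U t t1 t2 t3 /\
    forall z, inU z ->
      Re (Lop g d s1 s2 s3 z - RtoC l)%C > Cmod (Lop g d t1 t2 t3 z).

Definition classR (g d l : R) (F : C -> C) : Prop :=
  classA F /\
  exists F1 F2 F3 : C -> C,
    derivs3_U F F1 F2 F3 /\
    forall z, inU z -> Re (Lop g d F1 F2 F3 z) > l.

(* Main.v *)
Require Import Defs.
From Stdlib Require Import Reals Lra.
From Coquelicot Require Import Coquelicot.
Open Scope R_scope.

Lemma uniq_d (f : Complex.C -> Complex.C) z a b :
  @is_derive C_AbsRing C_NormedModule f z a ->
  @is_derive C_AbsRing C_NormedModule f z b -> a = b.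
Proof. intros Ha Hb. rewrite <- (is_C_derive_unique _ _ _ Ha). apply is_C_derive_unique; auto. Qed.

Lemma scal_d (f : Complex.C -> Complex.C) z a c :
  @is_derive C_AbsRing C_NormedModule f z a ->
  @is_derive C_AbsRing C_NormedModule (fun w => c * f w)%C z (c * a)%C.
Proof.
  intros Ha. unfold is_derive in *.
  pose proof (@filterdiff_scal_r_fct C_AbsRing (AbsRing_NormedModule C_AbsRing) C_NormedModule
     (locally z) _ c f _ (fun n m => Cmult_comm n m) Ha) as H.
  eapply filterdiff_ext_lin; [exact H|].
  intro y. simpl. change ((c * (y * a))%C = (y * (c * a))%C). ring.
Qed.

Lemma lin_d (f g : Complex.C -> Complex.C) z a b c1 c2 :
  @is_derive C_AbsRing C_NormedModule f z a ->
  @is_derive C_AbsRing C_NormedModule g z b ->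
  @is_derive C_AbsRing C_NormedModule (fun w => c1 * f w + c2 * g w)%C z (c1 * a + c2 * b)%C.
Proof.
  intros Ha Hb.
  exact (is_derive_plus _ _ _ _ _ (scal_d _ _ _ c1 Ha) (scal_d _ _ _ c2 Hb)).
Qed.

Lemma inU_open z : inU z -> @locally (AbsRing_UniformSpace C_AbsRing) z inU.
Proof.
  intros Hz. unfold inU in *.
  assert (Hp : 0 < 1 - Cmod z) by lra.
  exists (mkposreal _ Hp). intros y Hy. change Complex.C in y.
  change (Cmod (y - z)%C < 1 - Cmod z) in Hy.
  pose proof (Cmod_triangle (y - z)%C z).
  replace (y - z + z)%C with y in H by ring. simpl in Hy. lra.
Qed.

Lemma derivs3_uniq F F1 F2 F3 G1 G2 G3 :
  derivs3_U F F1 F2 F3 -> derivs3_U F G1 G2 G3 ->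
  forall z, inU z -> F1 z = G1 z /\ F2 z = G2 z /\ F3 z = G3 z.
Proof.
  intros HF HG.
  assert (E1 : forall z, inU z -> F1 z = G1 z).
  { intros z Hz. destruct (HF z Hz) as [A _]. destruct (HG z Hz) as [B _]. exact (uniq_d _ _ _ _ A B). }
  assert (E2 : forall z, inU z -> F2 z = G2 z).
  { intros z Hz. destruct (HF z Hz) as [_ [A _]]. destruct (HG z Hz) as [_ [B _]].
    apply (uniq_d G1 z); auto.
    eapply is_derive_ext_loc; [|exact A].
    eapply filter_imp; [|exact (inU_open z Hz)]. intros w Hw. auto. }
  intros z Hz. split; [auto|split; [auto|]].
  destruct (HF z Hz) as [_ [_ A]]. destruct (HG z Hz) as [_ [_ B]].
  apply (uniq_d G2 z); auto.
  eapply is_derive_ext_loc; [|exact A].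
  eapply filter_imp; [|exact (inU_open z Hz)]. intros w Hw. auto.
Qed.

Lemma derivs3_lin f f1 f2 f3 g g1 g2 g3 c1 c2 :
  derivs3_U f f1 f2 f3 -> derivs3_U g g1 g2 g3 ->
  derivs3_U (fun w => c1 * f w + c2 * g w)%C (fun w => c1 * f1 w + c2 * g1 w)%C
    (fun w => c1 * f2 w + c2 * g2 w)%C (fun w => c1 * f3 w + c2 * g3 w)%C.
Proof.
  intros Hf Hg z Hz. destruct (Hf z Hz) as [A1 [A2 A3]]. destruct (Hg z Hz) as [B1 [B2 B3]].
  split; [|split]; apply lin_d; auto.
Qed.

Lemma derivs3_ext f f' f1 f2 f3 :
  (forall w, f w = f' w) -> derivs3_U f f1 f2 f3 -> derivs3_U f' f1 f2 f3.
Proof.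
  intros E H z Hz. destruct (H z Hz) as [A [B D]]. split; auto.
  eapply is_derive_ext; [exact E| exact A].
Qed.

Lemma Re_ge (w : Complex.C) : - Cmod w <= Re w.
Proof. pose proof (re_le_Cmod w). pose proof (Rle_abs (- Re w)). rewrite Rabs_Ropp in H0. lra. Qed.

Lemma Ceq (a b : Complex.C) : fst a = fst b -> snd a = snd b -> a = b.
Proof. destruct a, b; simpl; intros; subst; auto. Qed.

Lemma half_s (a b : Complex.C) : (RtoC (/2) * (a + RtoC 1 * b) + RtoC (/2) * (a + RtoC (-1) * b))%C = a.
Proof. apply Ceq; unfold Cplus, Cmult, RtoC; simpl; field. Qed.
Lemma half_t (a b : Complex.C) : (RtoC (/2) * (a + RtoC 1 * b) + RtoC (-/2) * (a + RtoC (-1) * b))%C = b.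
Proof. apply Ceq; unfold Cplus, Cmult, RtoC; simpl; field. Qed.

Lemma Lop_lin g d f1 f2 f3 h1 h2 h3 c1 c2 z :
  Lop g d (fun w => c1 * f1 w + c2 * h1 w)%C (fun w => c1 * f2 w + c2 * h2 w)%C
    (fun w => c1 * f3 w + c2 * h3 w)%C z =
  (c1 * Lop g d f1 f2 f3 z + c2 * Lop g d h1 h2 h3 z)%C.
Proof. unfold Lop. ring. Qed.

Theorem theorem2 (g d l : R) (hl : 0 <= l) (hlg : l < g) (hgd : g <= d)
  (s t : Complex.C -> Complex.C) (hf : classH0 s t) :
  classRH0 g d l s t <->
  (forall eps : Complex.C, Cmod eps = 1 ->
     classR g d l (fun z => (s z + eps * t z)%C)).
Proof.
  split.
  - intros [_ [s1 [s2 [s3 [t1 [t2 [t3 [Hs [Ht Hineq]]]]]]]]] eps Heps.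
    destruct hf as [As [At [s0 [s'0 [t0 t'0]]]]].
    assert (Ef : forall w, (RtoC 1 * s w + eps * t w)%C = (s w + eps * t w)%C)
      by (intro; ring).
    split; [split; [|split]|].
    + intros z Hz. destruct (As z Hz) as [a Ha]. destruct (At z Hz) as [b Hb].
      exists (RtoC 1 * a + eps * b)%C. eapply is_derive_ext; [exact Ef|].
      apply lin_d; auto.
    + rewrite s0, t0. ring.
    + eapply is_derive_ext; [exact Ef|].
      pose proof (lin_d _ _ _ _ _ (RtoC 1) eps s'0 t'0) as K.
      replace (RtoC 1 * RtoC 1 + eps * RtoC 0)%C with (RtoC 1) in K by ring. exact K.
    + exists (fun w => RtoC 1 * s1 w + eps * t1 w)%C,
        (fun w => RtoC 1 * s2 w + eps * t2 w)%C, (fun w => RtoC 1 * s3 w + eps * t3 w)%C.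
      split.
      * eapply derivs3_ext; [exact Ef|]. apply derivs3_lin; auto.
      * intros z Hz. rewrite Lop_lin. specialize (Hineq z Hz).
        pose proof (Re_ge (eps * Lop g d t1 t2 t3 z)%C) as R1.
        rewrite Cmod_mult, Heps in R1.
        replace (Re (RtoC 1 * Lop g d s1 s2 s3 z + eps * Lop g d t1 t2 t3 z)%C) with
          (Re (Lop g d s1 s2 s3 z) + Re (eps * Lop g d t1 t2 t3 z)%C).
        2:{ unfold Re, Cplus, Cmult, RtoC; simpl; ring. }
        replace (Re (Lop g d s1 s2 s3 z - RtoC l)%C) with (Re (Lop g d s1 s2 s3 z) - l) in Hineq.
        2:{ unfold Re, Cminus, Cplus, Copp, RtoC; simpl; ring. }
        lra.
  - intros H. split; [exact hf|].
    assert (C1 : Cmod (RtoC 1) = 1) by (rewrite Cmod_R; apply Rabs_R1).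
    assert (Cm1 : Cmod (RtoC (-1)) = 1) by (rewrite Cmod_R, Rabs_left; lra).
    destruct (H _ C1) as [_ [P1 [P2 [P3 [HP _]]]]].
    destruct (H _ Cm1) as [_ [M1 [M2 [M3 [HM _]]]]].
    exists (fun w => RtoC (/2) * P1 w + RtoC (/2) * M1 w)%C,
      (fun w => RtoC (/2) * P2 w + RtoC (/2) * M2 w)%C,
      (fun w => RtoC (/2) * P3 w + RtoC (/2) * M3 w)%C,
      (fun w => RtoC (/2) * P1 w + RtoC (-/2) * M1 w)%C,
      (fun w => RtoC (/2) * P2 w + RtoC (-/2) * M2 w)%C,
      (fun w => RtoC (/2) * P3 w + RtoC (-/2) * M3 w)%C.
    assert (Hs : derivs3_U s (fun w => RtoC (/2) * P1 w + RtoC (/2) * M1 w)%C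
      (fun w => RtoC (/2) * P2 w + RtoC (/2) * M2 w)%C
      (fun w => RtoC (/2) * P3 w + RtoC (/2) * M3 w)%C).
    { apply (derivs3_ext (fun w => RtoC (/2) * (s w + RtoC 1 * t w) + RtoC (/2) * (s w + RtoC (-1) * t w))%C); [intro w; apply half_s|]. exact (derivs3_lin _ _ _ _ _ _ _ _ _ _ HP HM). }
    assert (Ht : derivs3_U t (fun w => RtoC (/2) * P1 w + RtoC (-/2) * M1 w)%C
      (fun w => RtoC (/2) * P2 w + RtoC (-/2) * M2 w)%C
      (fun w => RtoC (/2) * P3 w + RtoC (-/2) * M3 w)%C).
    { apply (derivs3_ext (fun w => RtoC (/2) * (s w + RtoC 1 * t w) + RtoC (-/2) * (s w + RtoC (-1) * t w))%C); [intro w; apply half_t|]. exact (derivs3_lin _ _ _ _ _ _ _ _ _ _ HP HM). }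
    split; [exact Hs|]. split; [exact Ht|].
    set (s1 := (fun w => RtoC (/2) * P1 w + RtoC (/2) * M1 w)%C) in *.
    set (s2 := (fun w => RtoC (/2) * P2 w + RtoC (/2) * M2 w)%C) in *.
    set (s3 := (fun w => RtoC (/2) * P3 w + RtoC (/2) * M3 w)%C) in *.
    set (t1 := (fun w => RtoC (/2) * P1 w + RtoC (-/2) * M1 w)%C) in *.
    set (t2 := (fun w => RtoC (/2) * P2 w + RtoC (-/2) * M2 w)%C) in *.
    set (t3 := (fun w => RtoC (/2) * P3 w + RtoC (-/2) * M3 w)%C) in *.
    intros z Hz.
    set (Ls := Lop g d s1 s2 s3 z). set (Lt := Lop g d t1 t2 t3 z).
    assert (G : forall eps, Cmod eps = 1 -> Re Ls + Re (eps * Lt)%C > l).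
    { intros eps He. destruct (H eps He) as [_ [G1 [G2 [G3 [HG HGi]]]]].
      assert (D : derivs3_U (fun w => s w + eps * t w)%C
         (fun w => RtoC 1 * s1 w + eps * t1 w)%C
         (fun w => RtoC 1 * s2 w + eps * t2 w)%C (fun w => RtoC 1 * s3 w + eps * t3 w)%C).
      { eapply derivs3_ext; [|apply derivs3_lin; [exact Hs|exact Ht]]. intro; simpl; ring. }
      destruct (derivs3_uniq _ _ _ _ _ _ _ HG D z Hz) as [E1 [E2 E3]].
      specialize (HGi z Hz).
      replace (Lop g d G1 G2 G3 z) with (RtoC 1 * Ls + eps * Lt)%C in HGi.
      2:{ unfold Ls, Lt. rewrite <- Lop_lin. unfold Lop. rewrite E1, E2, E3. reflexivity. }
      revert HGi. unfold Re, Cplus, Cmult, RtoC; simpl. intro. lra. }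
    replace (Re (Ls - RtoC l)%C) with (Re Ls - l).
    2:{ unfold Re, Cminus, Cplus, Copp, RtoC; simpl; ring. }
    destruct (Req_dec (Cmod Lt) 0) as [Z|NZ].
    + specialize (G _ C1). pose proof (Re_ge (RtoC (-1) * Lt)%C) as R1.
      rewrite Cmod_mult, Cm1, Z in R1.
      replace (Re (RtoC (-1) * Lt)%C) with (- Re (RtoC 1 * Lt)%C) in R1.
      2:{ unfold Re, Cmult, RtoC; simpl; ring. }
      rewrite Z. lra.
    + destruct Lt as [a b] eqn:ELt.
      set (m := Cmod (a, b)) in *.
      assert (Hm2 : m * m = a ^ 2 + b ^ 2).
      { unfold m, Cmod; simpl. apply sqrt_sqrt. nra. }
      assert (Hm : 0 < m) by (pose proof (Cmod_ge_0 (a, b)); unfold m in *; lra).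
      assert (He : Cmod (- a / m, b / m) = 1).
      { unfold Cmod; cbn [fst snd]. replace ((- a / m) ^ 2 + (b / m) ^ 2) with 1. apply sqrt_1.
        field_simplify; [|lra]. rewrite <- Hm2. field. lra. }
      specialize (G _ He).
      unfold Re at 2, Cmult in G. cbn [fst snd] in G.
      assert (Q : - a / m * a - b / m * b = - m).
      { apply (Rmult_eq_reg_l m); [|lra]. field_simplify; [|lra].
        replace (- a ^ 2 - b ^ 2) with (- (m * m)) by lra. field. }
      lra.
Qed.
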